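(* Let $\mathcal{U}$ be a selective nonprincipal ultrafilter on $\mathbb{N}$, let $X$ be an infinite-dimensional reflexive Banach space, and let $(T_n)_{n\ge1}$ be a bounded sequence in $B(X)$. Then the ultraproduct $(T_1,T_2,\ldots)_{\mathcal{U}}$ is not equal to $I\oplus0$ with respect to the decomposition $X^{\mathcal{U}}=X\oplus\widehat{X}$ (i.e. it is not the operator that is the identity on $X$ and zero on $\widehat{X}$).
   Context: $X^{\mathcal{U}}$ is the ultrapower of $X$, $(x_n)_{n,\mathcal{U}}$ the class of a bounded sequence; $X$ is identified with constant classes and $\widehat{X}=\{(x_n)_{n,\mathcal{U}}:w\text{-}\lim_{n,\mathcal{U}}x_n=0\}$, so $X^{\mathcal{U}}=X\oplus\widehat{X}$. The ultraproduct is $(T_1,T_2,\ldots)_{\mathcal{U}}(x_n)_{n,\mathcal{U}}=(T_nx_n)_{n,\mathcal{U}}$. An ultrafilter $\mathcal{U}$ on $\mathbb{N}$ is selective if (1) for every sequence $A_1,A_2,\dots$ in $\mathcal{U}$ there is $A\in\mathcal{U}$ with $A\setminus A_k$ finite for each $k$; and (2) for every partition of $\mathbb{N}$ into finite sets $A_1,A_2,\dots$ there is $A\in\mathcal{U}$ with $A\cap A_k$ a singleton for each $k$. *)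

(* Defs.v *)
From Stdlib Require Import Reals.
Open Scope R_scope.

Record RBanach := {
  car :> Type;
  zero : car;
  add : car -> car -> car;
  opp : car -> car;
  scal : R -> car -> car;
  norm : car -> R;
  add_assoc : forall x y z, add x (add y z) = add (add x y) z;
  add_comm : forall x y, add x y = add y x;
  add_zero : forall x, add zero x = x;
  add_opp : forall x, add x (opp x) = zero;
  scal_add_l : forall a b x, scal (a + b) x = add (scal a x) (scal b x);
  scal_add_r : forall a x y, scal a (add x y) = add (scal a x) (scal a y);
  scal_assoc : forall a b x, scal a (scal b x) = scal (a * b) x;
  scal_one : forall x, scal 1 x = x;
  norm_eq0 : forall x, norm x = 0 -> x = zero;
  norm_scal : forall a x, norm (scal a x) = Rabs a * norm x;
  norm_triangle : forall x y, norm (add x y) <= norm x + norm y;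
  complete : forall u : nat -> car,
    (forall eps, eps > 0 -> exists N, forall m n, (N <= m)%nat -> (N <= n)%nat ->
        norm (add (u m) (opp (u n))) < eps) ->
    exists l, forall eps, eps > 0 -> exists N, forall n, (N <= n)%nat ->
        norm (add (u n) (opp l)) < eps
}.

Arguments zero {r}. Arguments add {r}. Arguments opp {r}.
Arguments scal {r}. Arguments norm {r}.

Fixpoint lin_comb {X : RBanach} (v : nat -> X) (c : nat -> R) (n : nat) : X :=
  match n with
  | O => zero
  | S m => add (lin_comb v c m) (scal (c m) (v m))
  end.

Definition infinite_dimensional (X : RBanach) : Prop :=
  forall n : nat, exists v : nat -> X, forall c : nat -> R,
    lin_comb v c n = zero -> forall i, (i < n)%nat -> c i = 0.

Definition bounded_linear_functional {X : RBanach} (f : X -> R) : Prop :=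
  (forall x y, f (add x y) = f x + f y) /\
  (forall a x, f (scal a x) = a * f x) /\
  (exists C, forall x, Rabs (f x) <= C * norm x).

(** Reflexivity: every bounded linear functional Phi on X^* (with the dual carrying the
    operator norm: ||f|| <= M iff |f x| <= M ||x|| for all x) is evaluation at some x. *)
Definition reflexive (X : RBanach) : Prop :=
  forall Phi : (X -> R) -> R,
    (forall f g, bounded_linear_functional f -> bounded_linear_functional g ->
       Phi (fun x => f x + g x) = Phi f + Phi g) ->
    (forall a f, bounded_linear_functional f -> Phi (fun x => a * f x) = a * Phi f) ->
    (exists C, forall f M, bounded_linear_functional f -> 0 <= M ->
       (forall x, Rabs (f x) <= M * norm x) -> Rabs (Phi f) <= C * M) ->
    exists x0 : X, forall f, bounded_linear_functional f -> Phi f = f x0.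

Definition bounded_operator_sequence {X : RBanach} (T : nat -> X -> X) : Prop :=
  (forall n x y, T n (add x y) = add (T n x) (T n y)) /\
  (forall n a x, T n (scal a x) = scal a (T n x)) /\
  (exists C, forall n x, norm (T n x) <= C * norm x).

Definition ultrafilter (U : (nat -> Prop) -> Prop) : Prop :=
  U (fun _ => True) /\
  ~ U (fun _ => False) /\
  (forall A B : nat -> Prop, U A -> (forall n, A n -> B n) -> U B) /\
  (forall A B : nat -> Prop, U A -> U B -> U (fun n => A n /\ B n)) /\
  (forall A : nat -> Prop, U A \/ U (fun n => ~ A n)).

Definition nonprincipal (U : (nat -> Prop) -> Prop) : Prop :=
  forall m : nat, ~ U (fun n => n = m).

Definition finite_set (A : nat -> Prop) : Prop :=
  exists N, forall n, A n -> (n < N)%nat.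

Definition selective (U : (nat -> Prop) -> Prop) : Prop :=
  ultrafilter U /\
  (forall A : nat -> nat -> Prop, (forall k, U (A k)) ->
     exists B, U B /\ forall k, finite_set (fun n => B n /\ ~ A k n)) /\
  (forall A : nat -> nat -> Prop,
     (forall k, finite_set (A k)) ->
     (forall k, exists n, A k n) ->
     (forall k l n, A k n -> A l n -> k = l) ->
     (forall n, exists k, A k n) ->
     exists B, U B /\ forall k, exists n, (B n /\ A k n) /\
                 forall m, B m -> A k m -> m = n).

Definition ulim (U : (nat -> Prop) -> Prop) (a : nat -> R) (L : R) : Prop :=
  forall eps, eps > 0 -> U (fun n => Rabs (a n - L) < eps).

Definition weak_ulim {X : RBanach} (U : (nat -> Prop) -> Prop) (x : nat -> X) (x0 : X) : Prop :=
  forall f, bounded_linear_functional f -> ulim U (fun n => f (x n)) (f x0).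

Definition bounded_seq {X : RBanach} (x : nat -> X) : Prop :=
  exists C, forall n, norm (x n) <= C.

(** Elements of X^U are classes (x_n)_{n,U} of bounded sequences, with
    (x_n)_U = (y_n)_U iff lim_U ||x_n - y_n|| = 0.  X^U = X (+) \hat X where
    (x_n)_U = x + ((x_n - x)_n)_U with x = w-lim_U x_n.  Hence the ultraproduct
    (T_1,T_2,...)_U equals I (+) 0 iff for every bounded (x_n) with weak U-limit x,
    (T_n x_n)_U = x (the constant class). *)
Definition ultraproduct_is_I_plus_0 {X : RBanach} (U : (nat -> Prop) -> Prop)
    (T : nat -> X -> X) : Prop :=
  forall (x : nat -> X) (x0 : X), bounded_seq x -> weak_ulim U x x0 ->
    ulim U (fun n => norm (add (T n (x n)) (opp x0))) 0.

(* Main.v *)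
Require Import Defs.
From Stdlib Require Import Reals.
From Stdlib Require Import Lra Lia Classical ClassicalEpsilon FunctionalExtensionality.
Open Scope R_scope.
Arguments add_assoc {r}. Arguments add_comm {r}. Arguments add_zero {r}. Arguments add_opp {r}.
Arguments scal_add_l {r}. Arguments scal_add_r {r}. Arguments scal_assoc {r}. Arguments scal_one {r}.
Arguments norm_eq0 {r}. Arguments norm_scal {r}. Arguments norm_triangle {r}.

Lemma add_0r {X:RBanach} (x:X): add x zero = x.
Proof. rewrite add_comm; apply add_zero. Qed.
Lemma add_oppl {X:RBanach} (x:X): add (opp x) x = zero.
Proof. rewrite add_comm; apply add_opp. Qed.
Lemma add_cancel_l {X:RBanach} (a x y:X): add a x = add a y -> x = y.
Proof. intro H. rewrite <- (add_zero x), <- (add_zero y), <- (add_oppl a).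
  rewrite <- !add_assoc, H. reflexivity. Qed.
Lemma scal0l {X:RBanach} (x:X): scal 0 x = zero.
Proof. apply (add_cancel_l (scal 0 x)). rewrite add_0r, <- scal_add_l, Rplus_0_r. reflexivity. Qed.
Lemma scal0r {X:RBanach} a : scal a (zero:X) = zero.
Proof. apply (add_cancel_l (scal a zero)). rewrite add_0r, <- scal_add_r, add_zero. reflexivity. Qed.
Lemma opp_scal {X:RBanach} (x:X): opp x = scal (-1) x.
Proof. apply (add_cancel_l x). rewrite add_opp. rewrite <- (scal_one x) at 1.
  rewrite <- scal_add_l. replace (1 + -1) with 0 by ring. symmetry; apply scal0l. Qed.
Lemma norm_zero {X:RBanach} : norm (zero:X) = 0.
Proof. rewrite <- (scal0l (zero:X)), norm_scal, Rabs_R0; ring. Qed.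
Lemma norm_opp {X:RBanach} (x:X): norm (opp x) = norm x.
Proof. rewrite opp_scal, norm_scal. replace (Rabs (-1)) with 1. ring. rewrite Rabs_left; lra. Qed.
Lemma norm_nonneg {X:RBanach} (x:X): 0 <= norm x.
Proof. pose proof (norm_triangle x (opp x)) as H. rewrite add_opp, norm_zero, norm_opp in H; lra. Qed.
Lemma norm_pos {X:RBanach} (x:X): x <> zero -> 0 < norm x.
Proof. intro H. destruct (norm_nonneg x) as [h|h]; auto. symmetry in h. now apply norm_eq0 in h. Qed.
Lemma opp_add {X:RBanach} (x y:X): opp (add x y) = add (opp x) (opp y).
Proof. rewrite !opp_scal, scal_add_r. reflexivity. Qed.
Lemma opp_opp {X:RBanach} (x:X): opp (opp x) = x.
Proof. rewrite !opp_scal, scal_assoc. replace (-1 * -1) with 1 by ring. apply scal_one. Qed.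
Lemma opp_zero {X:RBanach} : opp (zero:X) = zero.
Proof. rewrite opp_scal; apply scal0r. Qed.
Lemma scal_opp {X:RBanach} a (x:X): scal a (opp x) = scal (-a) x.
Proof. rewrite opp_scal, scal_assoc. f_equal; ring. Qed.
Lemma opp_scal' {X:RBanach} a (x:X): opp (scal a x) = scal (-a) x.
Proof. rewrite opp_scal, scal_assoc. f_equal; ring. Qed.
Lemma add_sub_cancel {X:RBanach} (x y:X): add (add x (opp y)) y = x.
Proof. rewrite <- add_assoc, add_oppl, add_0r. reflexivity. Qed.
Lemma ndist_tri {X:RBanach} (a b c:X): norm (add a (opp c)) <= norm (add a (opp b)) + norm (add b (opp c)).
Proof. replace (add a (opp c)) with (add (add a (opp b)) (add b (opp c))). apply norm_triangle.
  rewrite <- add_assoc, (add_assoc (opp b)), add_oppl, add_zero. reflexivity. Qed.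
Lemma ndist_sym {X:RBanach} (a b:X): norm (add a (opp b)) = norm (add b (opp a)).
Proof. rewrite <- norm_opp, opp_add, opp_opp, add_comm. reflexivity. Qed.
Lemma scal_sub {X:RBanach} a (x y:X): scal a (add x (opp y)) = add (scal a x) (opp (scal a y)).
Proof. rewrite scal_add_r, scal_opp, opp_scal'. reflexivity. Qed.

Lemma U_mono U (A B : nat -> Prop) : ultrafilter U -> U A -> (forall n, A n -> B n) -> U B.
Proof. intros (_&_&H&_) ; eauto. Qed.
Lemma U_and U (A B : nat -> Prop) : ultrafilter U -> U A -> U B -> U (fun n => A n /\ B n).
Proof. intros (_&_&_&H&_); eauto. Qed.
Lemma U_ex U (A : nat -> Prop) : ultrafilter U -> U A -> exists n, A n.
Proof. intros HU HA. apply NNPP; intro H. pose proof HU as (_&H2&_).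
  apply H2. apply (U_mono U A); auto. intros n h; apply H; eauto. Qed.
Lemma U_true U : ultrafilter U -> U (fun _ => True).
Proof. intros (h&_); exact h. Qed.
Lemma U_all U (A : nat -> Prop) : ultrafilter U -> (forall n, A n) -> U A.
Proof. intros HU h. apply (U_mono U (fun _ => True)); [auto|apply U_true; auto|auto]. Qed.
Lemma U_cofin U K : ultrafilter U -> nonprincipal U -> U (fun n => (K <= n)%nat).
Proof. intros HU HN. induction K.
  - apply U_all; auto; intros; lia.
  - assert (U (fun n => n <> K)).
    { destruct HU as (_&_&_&_&h). destruct (h (fun n => n = K)); auto. exfalso; eapply HN; eauto. }
    eapply U_mono; [auto| apply (U_and U _ _ HU IHK H)|]. simpl; intros n [h1 h2]; lia. Qed.

Lemma ulim_exists U (a : nat -> R) C : ultrafilter U -> (forall n, Rabs (a n) <= C) ->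
  exists L, ulim U a L.
Proof. intros HU Hb.
  set (E := fun t => U (fun n => t <= a n)).
  assert (HE1 : bound E).
  { exists C. intros t Ht. apply Rnot_lt_le; intro Hlt. destruct (U_ex U _ HU Ht) as [n hn].
    pose proof (Hb n). pose proof (Rle_abs (a n)). lra. }
  assert (HE2 : exists x, E x).
  { exists (-C). unfold E. apply U_all; auto. intro n. pose proof (Hb n). pose proof (Rle_abs (- a n)).
    rewrite Rabs_Ropp in H0. lra. }
  destruct (completeness E HE1 HE2) as [L [HL1 HL2]].
  exists L. intros eps Heps.
  assert (h1 : U (fun n => L - eps < a n)).
  { apply NNPP; intro H. assert (is_upper_bound E (L - eps)).
    { intros t Ht. apply Rnot_lt_le; intro Hlt. apply H. eapply U_mono; eauto. simpl; intros; lra. }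
    specialize (HL2 _ H0). lra. }
  assert (h2 : U (fun n => a n < L + eps)).
  { assert (~ E (L + eps/2)). { intro h. specialize (HL1 _ h). lra. }
    destruct HU as (a1&a2&a3&a4&a5). destruct (a5 (fun n => L + eps/2 <= a n)). contradiction.
    eapply a3; eauto. simpl; intros n hn; lra. }
  eapply U_mono; [auto|apply (U_and U _ _ HU h1 h2)|]. simpl; intros n [g1 g2].
  apply Rabs_def1; lra. Qed.

Lemma ulim_unique U a L1 L2 : ultrafilter U -> ulim U a L1 -> ulim U a L2 -> L1 = L2.
Proof. intros HU h1 h2. apply NNPP; intro hne.
  set (e := Rabs (L1 - L2) / 2). assert (e > 0).
  { unfold e. assert (0 < Rabs (L1 - L2)) by (apply Rabs_pos_lt; lra). lra. }
  destruct (U_ex U _ HU (U_and U _ _ HU (h1 e H) (h2 e H))) as [n [g1 g2]].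
  pose proof (Rabs_triang (L1 - a n) (a n - L2)). replace (L1 - a n + (a n - L2)) with (L1 - L2) in H0 by ring.
  rewrite <- Rabs_Ropp in g1. replace (- (a n - L1)) with (L1 - a n) in g1 by ring. unfold e in *. lra. Qed.

Lemma ulim_plus U a b La Lb : ultrafilter U -> ulim U a La -> ulim U b Lb ->
  ulim U (fun n => a n + b n) (La + Lb).
Proof. intros HU h1 h2 eps he.
  eapply U_mono; [auto|apply (U_and U _ _ HU (h1 (eps/2) ltac:(lra)) (h2 (eps/2) ltac:(lra)))|].
  simpl; intros n [g1 g2]. pose proof (Rabs_triang (a n - La) (b n - Lb)).
  replace (a n + b n - (La + Lb)) with (a n - La + (b n - Lb)) by ring. lra. Qed.

Lemma ulim_scal U a La k : ultrafilter U -> ulim U a La -> ulim U (fun n => k * a n) (k * La).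
Proof. intros HU h eps he.
  eapply U_mono; [auto|apply (h (eps / (Rabs k + 1)))|].
  { assert (0 < Rabs k + 1) by (pose proof (Rabs_pos k); lra). apply Rdiv_lt_0_compat; lra. }
  simpl; intros n g. replace (k * a n - k * La) with (k * (a n - La)) by ring. rewrite Rabs_mult.
  assert (0 < Rabs k + 1) by (pose proof (Rabs_pos k); lra).
  apply Rle_lt_trans with ((Rabs k + 1) * Rabs (a n - La)).
  { pose proof (Rabs_pos (a n - La)). nra. }
  apply (Rmult_lt_compat_l (Rabs k + 1)) in g; auto.
  replace ((Rabs k + 1) * (eps / (Rabs k + 1))) with eps in g by (field; lra). exact g. Qed.

Lemma ulim_bound U a L B : ultrafilter U -> ulim U a L -> (forall n, Rabs (a n) <= B) -> Rabs L <= B.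
Proof. intros HU h hb. apply Rnot_lt_le; intro hl.
  destruct (U_ex U _ HU (h (Rabs L - B) ltac:(lra))) as [n hn].
  pose proof (hb n). pose proof (Rabs_triang_inv L (a n)). rewrite <- Rabs_Ropp in hn.
  replace (- (a n - L)) with (L - a n) in hn by ring. lra. Qed.

Lemma add_swap4 {X:RBanach} (a b c d : X) : add (add a b) (add c d) = add (add a c) (add b d).
Proof. rewrite <- !add_assoc. f_equal. rewrite !add_assoc. f_equal. apply add_comm. Qed.

Lemma lc_ext {X:RBanach} (v v' : nat -> X) c c' n : (forall i, (i < n)%nat -> v i = v' i) ->
  (forall i, (i < n)%nat -> c i = c' i) -> lin_comb v c n = lin_comb v' c' n.
Proof. induction n; intros h1 h2; simpl; auto. rewrite IHn, h1, h2; auto. Qed.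

Lemma lc_zero {X:RBanach} (v : nat -> X) n : lin_comb v (fun _ => 0) n = zero.
Proof. induction n; simpl; auto. rewrite IHn, scal0l, add_zero; auto. Qed.

Lemma lc_zerov {X:RBanach} c n : lin_comb (fun _ => (zero:X)) c n = zero.
Proof. induction n; simpl; auto. rewrite IHn, scal0r, add_zero; auto. Qed.

Lemma lc_add {X:RBanach} (v : nat -> X) c d n :
  lin_comb v (fun i => c i + d i) n = add (lin_comb v c n) (lin_comb v d n).
Proof. induction n; simpl. rewrite add_zero; auto. rewrite IHn, scal_add_l, add_swap4; auto. Qed.

Lemma lc_scal {X:RBanach} (v : nat -> X) k c n :
  lin_comb v (fun i => k * c i) n = scal k (lin_comb v c n).
Proof. induction n; simpl. rewrite scal0r; auto. rewrite IHn, scal_add_r, scal_assoc; auto. Qed.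

Lemma lc_vadd {X:RBanach} (v w : nat -> X) c n :
  lin_comb (fun i => add (v i) (w i)) c n = add (lin_comb v c n) (lin_comb w c n).
Proof. induction n; simpl. rewrite add_zero; auto. rewrite IHn, scal_add_r, add_swap4; auto. Qed.

Lemma lc_vdelta {X:RBanach} (y : X) j c n : (j < n)%nat ->
  lin_comb (fun i => if Nat.eqb i j then y else zero) c n = scal (c j) y.
Proof. induction n; intro h; [lia|]. simpl. destruct (Nat.eqb n j) eqn:E.
  - apply Nat.eqb_eq in E; subst. rewrite (lc_ext _ (fun _ => zero) _ c).
    + rewrite lc_zerov, add_zero; auto.
    + intros i hi. destruct (Nat.eqb i j) eqn:E; auto. apply Nat.eqb_eq in E; lia.
    + auto.
  - apply Nat.eqb_neq in E. rewrite IHn by lia. rewrite scal0r, add_0r; auto. Qed.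

Lemma lc_delta {X:RBanach} (v : nat -> X) j k n : (j < n)%nat ->
  lin_comb v (fun i => if Nat.eqb i j then k else 0) n = scal k (v j).
Proof. induction n; intro h; [lia|]. simpl. destruct (Nat.eqb n j) eqn:E.
  - apply Nat.eqb_eq in E; subst. rewrite (lc_ext _ v _ (fun _ => 0)).
    + rewrite lc_zero, add_zero; auto.
    + auto.
    + intros i hi. destruct (Nat.eqb i j) eqn:E; auto. apply Nat.eqb_eq in E; lia.
  - apply Nat.eqb_neq in E. rewrite IHn by lia. rewrite scal0l, add_0r; auto. Qed.

Fixpoint rsum (f : nat -> R) (n : nat) : R :=
  match n with O => 0 | S m => rsum f m + f m end.

Lemma lc_vscal {X:RBanach} (s : nat -> R) (y : X) d n :
  lin_comb (fun i => scal (s i) y) d n = scal (rsum (fun i => d i * s i) n) y.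
Proof. induction n; simpl. rewrite scal0l; auto. rewrite IHn, scal_assoc, scal_add_l; auto. Qed.

Lemma lc_update {X:RBanach} (v : nat -> X) j x c n : (j < n)%nat ->
  lin_comb (fun i => if Nat.eqb i j then x else v i) c n = add (lin_comb v c n) (scal (c j) (add x (opp (v j)))).
Proof. intro h. rewrite (lc_ext _ (fun i => add (v i) (if Nat.eqb i j then add x (opp (v j)) else zero)) _ c).
  - rewrite lc_vadd, lc_vdelta; auto.
  - intros i hi. destruct (Nat.eqb i j) eqn:E. apply Nat.eqb_eq in E; subst.
    rewrite add_comm, add_sub_cancel; auto. rewrite add_0r; auto.
  - auto. Qed.

Definition in_span {X:RBanach} (ys : nat -> X) n (x : X) := exists a, x = lin_comb ys a n.

Lemma lc_extend {X:RBanach} (ys : nat -> X) b n g :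
  lin_comb ys (fun i => if Nat.eqb i n then g else b i) (S n) = add (lin_comb ys b n) (scal g (ys n)).
Proof. simpl. rewrite Nat.eqb_refl. f_equal. apply lc_ext; auto.
  intros i hi. destruct (Nat.eqb i n) eqn:E; auto. apply Nat.eqb_eq in E; lia. Qed.

Lemma lc_S {X:RBanach} (v : nat -> X) c n : lin_comb v c (S n) = add (lin_comb v c n) (scal (c n) (v n)).
Proof. reflexivity. Qed.

Lemma eqb_false a b : a <> b -> Nat.eqb a b = false.
Proof. apply Nat.eqb_neq. Qed.

Lemma steinitz {X:RBanach} N : forall (ys u : nat -> X), (forall i, (i <= N)%nat -> in_span ys N (u i)) ->
  exists c, lin_comb u c (S N) = zero /\ exists i, (i <= N)%nat /\ c i <> 0.
Proof.
  induction N; intros ys u Hu.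
  - destruct (Hu 0%nat (le_n _)) as [a ha]. simpl in ha.
    exists (fun _ => 1). split. simpl. rewrite ha, scal0r, add_zero; auto.
    exists 0%nat; split; auto; lra.
  - set (A := fun i => epsilon (inhabits (fun _:nat => 0)) (fun a => u i = lin_comb ys a (S N))).
    assert (HA: forall i, (i <= S N)%nat -> u i = add (lin_comb ys (A i) N) (scal (A i N) (ys N))).
    { intros i hi. rewrite <- lc_S. unfold A.
      apply (epsilon_spec (inhabits _) (fun a => u i = lin_comb ys a (S N))). apply Hu; auto. }
    destruct (classic (exists j, (j <= S N)%nat /\ A j N <> 0)) as [[j [hj hp]] | hno].
    2: {
      assert (Hz : forall i, (i <= S N)%nat -> A i N = 0).
      { intros i hi. apply NNPP; intro h. apply hno; eauto. }
      destruct (IHN ys u) as [c [h1 h2]].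
      { intros i hi. exists (A i). rewrite HA, Hz by lia. rewrite scal0l, add_0r; auto. }
      exists (fun i => if Nat.eqb i (S N) then 0 else c i). split.
      + rewrite lc_S, Nat.eqb_refl, scal0l, add_0r, <- h1. apply lc_ext; auto.
        intros i hi. rewrite eqb_false by lia. auto.
      + destruct h2 as [i [hi hc]]. exists i; split; [lia|]. rewrite eqb_false by lia. auto. }
    set (p := A j N) in *.
    set (u' := fun i => add (u i) (scal (-(A i N / p)) (u j))).
    assert (Hu'span : forall i, (i <= S N)%nat -> u' i = lin_comb ys (fun m => A i m + (-(A i N/p)) * A j m) N).
    { intros i hi. unfold u'. rewrite (HA i), (HA j) by auto. rewrite lc_add, lc_scal.
      rewrite scal_add_r, scal_assoc. fold p. replace (-(A i N / p) * p) with (- A i N) by (field; auto).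
      rewrite add_swap4, <- scal_add_l, Rplus_opp_r, scal0l, add_0r. auto. }
    assert (Hu'j : u' j = zero).
    { unfold u'. fold p. replace (-(p / p)) with (-1) by (field; auto). rewrite <- opp_scal, add_opp. auto. }
    set (w := fun i => if Nat.eqb i j then u' (S N) else u' i).
    destruct (IHN ys w) as [c [hc0 [i0 [hi0 hci0]]]].
    { intros i hi. unfold w. destruct (Nat.eqb i j); eexists; apply Hu'span; lia. }
    set (d := fun i => if Nat.eqb i (S N) then c j else c i).
    assert (Hd : lin_comb u' d (S (S N)) = zero).
    { rewrite lc_S.
      replace (lin_comb u' d (S N)) with (lin_comb u' c (S N))
        by (apply lc_ext; auto; intros i hi; unfold d; rewrite eqb_false by lia; auto).
      unfold d. rewrite Nat.eqb_refl.
      destruct (Nat.eq_dec j (S N)) as [e|e].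
      - replace (u' (S N)) with (zero:X) by (rewrite <- e; auto). rewrite scal0r, add_0r, <- hc0. apply lc_ext; auto.
        intros i hi. unfold w. rewrite eqb_false by lia. auto.
      - rewrite <- hc0. unfold w. rewrite lc_update by lia. rewrite Hu'j, opp_zero, add_0r. reflexivity. }
    unfold u' in Hd. rewrite (lc_vadd u (fun i => scal (-(A i N / p)) (u j))) in Hd.
    rewrite (lc_vscal (fun i => -(A i N / p)) (u j)) in Hd.
    set (K := rsum _ _) in Hd.
    exists (fun i => d i + (if Nat.eqb i j then K else 0)). split.
    + rewrite lc_add, lc_delta by lia. exact Hd.
    + assert (exists i1, (i1 <= S N)%nat /\ i1 <> j /\ d i1 <> 0) as [i1 [g1 [g2 g3]]].
      { destruct (Nat.eq_dec i0 j) as [e|e].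
        - exists (S N). split; [lia|]. split; [lia|]. unfold d. rewrite Nat.eqb_refl. subst; auto.
        - exists i0. split; [lia|]. split; auto. unfold d. rewrite eqb_false by lia. auto. }
      exists i1. split; auto. rewrite eqb_false by auto. lra.
Qed.

Lemma exists_outside {X:RBanach} : infinite_dimensional X -> forall (ys : nat -> X) N,
  exists v, ~ in_span ys N v.
Proof. intros HI ys N. destruct (HI (S N)) as [v hv].
  apply NNPP; intro h.
  destruct (steinitz N ys v) as [c [h1 [i [hi hc]]]].
  { intros i hi. apply NNPP; intro h'. apply h; eauto. }
  apply hc. apply (hv c h1). lia. Qed.

Lemma inv_pos k : 0 < / (INR k + 1).
Proof. apply Rinv_0_lt_compat. pose proof (pos_INR k); lra. Qed.

Lemma small_inv e : e > 0 -> exists K, forall k, (K <= k)%nat -> / (INR k + 1) < e.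
Proof. intro he. destruct (INR_unbounded (/ e)) as [K hK]. exists K. intros k hk.
  apply le_INR in hk. assert (h : / e < INR k + 1) by lra.
  assert (0 < / e) by (apply Rinv_0_lt_compat; auto).
  rewrite <- (Rinv_inv e). apply Rinv_lt_contravar; auto. apply Rmult_lt_0_compat; lra. Qed.

Lemma ident1 {X:RBanach} (v y L : X) g t :
  add (add v (opp (scal g y))) (opp L) = add (add v (opp (add L (scal t y)))) (scal (t - g) y).
Proof. rewrite opp_add.
  replace (scal (t-g) y) with (add (scal t y) (opp (scal g y)))
    by (rewrite opp_scal', <- scal_add_l; f_equal; ring).
  rewrite <- !add_assoc. f_equal. rewrite (add_assoc (opp (scal t y))), add_oppl, add_zero.
  apply add_comm. Qed.

Lemma lc_lower {X:RBanach} (ys : nat -> X) N dy c : (forall b, dy <= norm (add (ys N) (opp (lin_comb ys b N)))) ->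
  Rabs (c N) * dy <= norm (lin_comb ys c (S N)).
Proof. intro hb. set (t := c N). destruct (Req_dec t 0) as [h|h].
  - rewrite h, Rabs_R0, Rmult_0_l. apply norm_nonneg.
  - set (b := fun i => -1 * (c i / t)).
    replace (lin_comb ys c (S N)) with (scal t (add (ys N) (opp (lin_comb ys b N)))).
    + rewrite norm_scal. apply Rmult_le_compat_l. apply Rabs_pos. auto.
    + rewrite scal_sub, <- lc_scal, lc_S. fold t.
      replace (fun i => t * b i) with (fun i => -1 * c i)
        by (apply functional_extensionality; intro i; unfold b; field; auto).
      rewrite lc_scal, <- opp_scal, opp_opp. apply add_comm. Qed.

Lemma distpos {X:RBanach} U : ultrafilter U -> nonprincipal U -> forall N (ys : nat -> X) v,
  ~ in_span ys N v -> exists d, d > 0 /\ forall c, d <= norm (add v (opp (lin_comb ys c N))).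
Proof. intros HU HN N. induction N; intros ys v Hv.
  - exists (norm v). split.
    + apply norm_pos. intro h; apply Hv. exists (fun _ => 0). simpl; auto.
    + intro c. simpl. rewrite opp_zero, add_0r. lra.
  - destruct (classic (in_span ys N (ys N))) as [[a ha] | hy].
    + assert (hv' : ~ in_span ys N v).
      { intros [b hb]. apply Hv. exists (fun i => if Nat.eqb i N then 0 else b i).
        rewrite lc_extend, scal0l, add_0r; auto. }
      destruct (IHN ys v hv') as [d [hd1 hd2]]. exists d; split; auto.
      intro c. rewrite lc_S, ha, <- lc_scal, <- lc_add. apply hd2.
    + destruct (IHN ys (ys N) hy) as [dy [hdy1 hdy2]].
      apply NNPP; intro hno.
      assert (Hsmall : forall k:nat, exists c, norm (add v (opp (lin_comb ys c (S N)))) < / (INR k + 1)).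
      { intro k. apply NNPP; intro h. apply hno. exists (/ (INR k + 1)). split. apply inv_pos.
        intro c. apply Rnot_lt_le; intro h'. apply h; eauto. }
      set (C := fun k:nat => epsilon (inhabits (fun _:nat => 0))
            (fun c => norm (add v (opp (lin_comb ys c (S N)))) < / (INR k + 1))).
      assert (HC : forall k, norm (add v (opp (lin_comb ys (C k) (S N)))) < / (INR k + 1)).
      { intro k. unfold C. apply (epsilon_spec (inhabits (fun _:nat => 0)) (fun c => norm (add v (opp (lin_comb ys c (S N)))) < / (INR k + 1))). apply Hsmall. }
      assert (Hbd : forall k, Rabs (C k N) <= (norm v + 1) / dy).
      { intro k. pose proof (lc_lower ys N dy (C k) hdy2).
        set (L := lin_comb ys (C k) (S N)) in *.
        assert (norm L <= norm v + 1).
        { replace L with (add v (opp (add v (opp L)))).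
          - pose proof (norm_triangle v (opp (add v (opp L)))). rewrite norm_opp in H0.
            pose proof (HC k). fold L in H1. pose proof (inv_pos k).
            assert (/ (INR k + 1) <= 1). { rewrite <- Rinv_1. apply Rinv_le_contravar. lra.
              pose proof (pos_INR k); lra. }
            lra.
          - rewrite opp_add, opp_opp, add_assoc, add_opp, add_zero; auto. }
        apply (Rmult_le_reg_r dy); auto. unfold Rdiv. rewrite Rmult_assoc, Rinv_l by lra. lra. }
      destruct (ulim_exists U (fun k => C k N) _ HU Hbd) as [g Hg].
      set (v' := add v (opp (scal g (ys N)))).
      assert (hv' : ~ in_span ys N v').
      { intros [b hb]. apply Hv. exists (fun i => if Nat.eqb i N then g else b i).
        rewrite lc_extend, <- hb. unfold v'. rewrite add_sub_cancel; auto. }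
      destruct (IHN ys v' hv') as [d2 [hd21 hd22]].
      destruct (small_inv (d2/2) ltac:(lra)) as [K HK].
      assert (hpos : 0 < d2 / (2 * (norm (ys N) + 1))).
      { pose proof (norm_nonneg (ys N)). apply Rdiv_lt_0_compat; lra. }
      destruct (U_ex U _ HU (U_and U _ _ HU (Hg _ hpos) (U_cofin U K HU HN))) as [k [hk1 hk2]].
      simpl in hk1. specialize (hd22 (C k)). specialize (HK k hk2). specialize (HC k).
      unfold v' in hd22. rewrite (ident1 v (ys N) _ g (C k N)) in hd22. rewrite <- lc_S in hd22.
      pose proof (norm_triangle (add v (opp (lin_comb ys (C k) (S N)))) (scal (C k N - g) (ys N))).
      rewrite norm_scal in H.
      assert (Rabs (C k N - g) * norm (ys N) <= Rabs (C k N - g) * (norm (ys N) + 1)).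
      { apply Rmult_le_compat_l. apply Rabs_pos. lra. }
      assert (Rabs (C k N - g) * (norm (ys N) + 1) < d2 / 2).
      { pose proof (norm_nonneg (ys N)).
        apply (Rmult_lt_compat_r (norm (ys N) + 1)) in hk1; [|lra].
        replace (d2 / (2 * (norm (ys N) + 1)) * (norm (ys N) + 1)) with (d2/2) in hk1 by (field; lra). lra. }
      lra.
Qed.

Lemma riesz {X:RBanach} U : ultrafilter U -> nonprincipal U -> infinite_dimensional X ->
  forall (ys : nat -> X) k, exists e, norm e = 1 /\ forall b, / 2 <= norm (add e (opp (lin_comb ys b k))).
Proof. intros HU HN HI ys k.
  destruct (exists_outside HI ys k) as [v hv].
  destruct (distpos U HU HN k ys v hv) as [d [hd1 hd2]].
  set (E := fun r => forall c, r <= norm (add v (opp (lin_comb ys c k)))).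
  assert (HE1 : bound E).
  { exists (norm v). intros r hr. specialize (hr (fun _ => 0)). rewrite lc_zero, opp_zero, add_0r in hr. auto. }
  destruct (completeness E HE1 (ex_intro _ d hd2)) as [D [HD1 HD2]].
  assert (hDd : d <= D) by (apply HD1; exact hd2).
  assert (hlow : forall c, D <= norm (add v (opp (lin_comb ys c k)))).
  { intro c. apply HD2. intros r hr. apply hr. }
  assert (exists c0, norm (add v (opp (lin_comb ys c0 k))) < 2 * D) as [c0 hc0].
  { apply NNPP; intro h. assert (E (2 * D)).
    { intro c. apply Rnot_lt_le; intro h'. apply h; eauto. }
    specialize (HD1 _ H). lra. }
  set (r0 := norm (add v (opp (lin_comb ys c0 k)))) in *.
  assert (hr0 : D <= r0) by apply hlow.
  exists (scal (/ r0) (add v (opp (lin_comb ys c0 k)))). split.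
  - rewrite norm_scal. fold r0. rewrite Rabs_right. field; lra.
    apply Rle_ge, Rlt_le, Rinv_0_lt_compat; lra.
  - intro b. replace (add (scal (/ r0) (add v (opp (lin_comb ys c0 k)))) (opp (lin_comb ys b k)))
      with (scal (/ r0) (add v (opp (lin_comb ys (fun i => c0 i + r0 * b i) k)))).
    + rewrite norm_scal. specialize (hlow (fun i => c0 i + r0 * b i)).
      rewrite Rabs_right by (apply Rle_ge, Rlt_le, Rinv_0_lt_compat; lra).
      apply Rle_trans with (/ r0 * D).
      * apply (Rmult_le_reg_l r0); [lra|]. rewrite <- Rmult_assoc, Rinv_r by lra. lra.
      * apply Rmult_le_compat_l; auto. apply Rlt_le, Rinv_0_lt_compat; lra.
    + rewrite lc_add, lc_scal, opp_add, add_assoc, !scal_add_r, !scal_opp, scal_assoc.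
      f_equal. rewrite opp_scal. f_equal. field. lra.
Qed.

Definition pickR {X:RBanach} (ys : nat -> X) k : X :=
  epsilon (inhabits zero) (fun e => norm e = 1 /\ forall b, / 2 <= norm (add e (opp (lin_comb ys b k)))).

Fixpoint build {X:RBanach} (k : nat) : nat -> X :=
  match k with
  | O => fun _ => zero
  | S m => fun i => if Nat.eqb i m then pickR (build m) m else build m i
  end.

Definition seqe {X:RBanach} (i : nat) : X := pickR (@build X i) i.

Lemma build_stable {X:RBanach} k i : (i < k)%nat -> @build X k i = seqe i.
Proof. induction k; intro h; [lia|]. simpl. destruct (Nat.eqb i k) eqn:E.
  - apply Nat.eqb_eq in E; subst. reflexivity.
  - apply Nat.eqb_neq in E. apply IHk; lia. Qed.

Lemma seqe_spec {X:RBanach} U : ultrafilter U -> nonprincipal U -> infinite_dimensional X ->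
  forall j, norm (@seqe X j) = 1 /\ forall b, / 2 <= norm (add (seqe j) (opp (lin_comb (@build X j) b j))).
Proof. intros HU HN HI j. unfold seqe, pickR.
  apply (epsilon_spec (inhabits zero) (fun e => norm e = 1 /\ forall b, / 2 <= norm (add e (opp (lin_comb (@build X j) b j))))).
  apply (riesz U); auto. Qed.

Lemma seqe_sep {X:RBanach} U : ultrafilter U -> nonprincipal U -> infinite_dimensional X ->
  forall i j, i <> j -> / 2 <= norm (add (@seqe X i) (opp (seqe j))).
Proof. intros HU HN HI.
  assert (H : forall i j, (i < j)%nat -> / 2 <= norm (add (@seqe X j) (opp (seqe i)))).
  { intros i j hij. destruct (seqe_spec U HU HN HI j) as [_ h].
    specialize (h (fun m => if Nat.eqb m i then 1 else 0)). rewrite lc_delta, scal_one, build_stable in h; auto. }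
  intros i j hij. destruct (Nat.lt_total i j) as [h|[h|h]]; try lia.
  - rewrite ndist_sym. auto.
  - auto. Qed.

Lemma weak_limit_exists {X:RBanach} U (z : nat -> X) : ultrafilter U -> reflexive X -> bounded_seq z ->
  exists x0, weak_ulim U z x0.
Proof. intros HU HR [Cz hz].
  set (Phi := fun f : X -> R => epsilon (inhabits 0) (fun L => ulim U (fun n => f (z n)) L)).
  assert (HPhi : forall f, (exists L, ulim U (fun n => f (z n)) L) -> ulim U (fun n => f (z n)) (Phi f)).
  { intros f h. unfold Phi. apply (epsilon_spec (inhabits 0) (fun L => ulim U (fun n => f (z n)) L)). auto. }
  assert (Hex : forall f, bounded_linear_functional f -> exists L, ulim U (fun n => f (z n)) L).
  { intros f (_&_&[Cf hCf]). apply (ulim_exists U _ (Rabs Cf * Cz)); auto. intro n.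
    apply Rle_trans with (Cf * norm (z n)); auto. apply Rle_trans with (Rabs Cf * norm (z n)).
    apply Rmult_le_compat_r. apply norm_nonneg. apply Rle_abs.
    apply Rmult_le_compat_l. apply Rabs_pos. auto. }
  destruct (HR Phi) as [x0 hx0].
  - intros f g hf hg. apply (ulim_unique U (fun n => f (z n) + g (z n))); auto.
    + apply (HPhi (fun x => f x + g x)). exists (Phi f + Phi g). apply ulim_plus; auto.
    + apply ulim_plus; auto.
  - intros a f hf. apply (ulim_unique U (fun n => a * f (z n))); auto.
    + apply (HPhi (fun x => a * f x)). exists (a * Phi f). apply ulim_scal; auto.
    + apply ulim_scal; auto.
  - exists Cz. intros f M hf hM hfm. apply (ulim_bound U (fun n => f (z n))); auto.
    intro n. apply Rle_trans with (M * norm (z n)); auto. rewrite (Rmult_comm Cz). apply Rmult_le_compat_l; auto.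
  - exists x0. intros f hf. rewrite <- hx0 by auto. apply HPhi; auto.
Qed.

Fixpoint gmax (P : nat -> Prop) (m : nat) : nat :=
  match m with
  | O => O
  | S m' => if excluded_middle_informative (P (S m')) then S m' else gmax P m'
  end.

Lemma gmax_spec1 P m : gmax P m = O \/ P (gmax P m).
Proof. induction m; simpl; auto. destruct (excluded_middle_informative (P (S m))); auto. Qed.

Lemma gmax_spec2 P m k : (k <= m)%nat -> P k -> (k <= gmax P m)%nat.
Proof. induction m; intros h1 h2; simpl; [lia|].
  destruct (excluded_middle_informative (P (S m))); auto.
  destruct (Nat.eq_dec k (S m)); [subst; contradiction|]. apply IHm; auto; lia. Qed.

Lemma inv8 k : (8 <= k)%nat -> / (INR k + 1) < / 8.
Proof. intro h. apply le_INR in h. simpl in h. apply Rinv_lt_contravar; lra. Qed.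

Theorem lemma6p4 (U : (nat -> Prop) -> Prop) (X : RBanach) (T : nat -> X -> X) :
  selective U -> nonprincipal U ->
  infinite_dimensional X -> reflexive X ->
  bounded_operator_sequence T ->
  ~ ultraproduct_is_I_plus_0 U T.
Proof.
  intros [HU [Hsel1 _]] HN HI HR _ H.
  set (e := @seqe X).
  assert (He1 : forall k, norm (e k) = 1) by (intro k; apply (seqe_spec U HU HN HI k)).
  assert (Hsep := seqe_sep (X:=X) U HU HN HI).
  assert (Hpt : forall k, ulim U (fun n => norm (add (T n (e k)) (opp (e k)))) 0).
  { intro k. apply H. exists 1; intro; rewrite He1; lra.
    intros f hf eps he. apply U_all; auto; intro n. unfold Rminus. rewrite Rplus_opp_r, Rabs_R0; lra. }
  set (A := fun k n => norm (add (T n (e k)) (opp (e k))) < / (INR k + 1)).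
  assert (HA : forall k, U (A k)).
  { intro k. eapply U_mono; [auto | apply (Hpt k _ (inv_pos k)) | ]. simpl; intros n h.
    rewrite Rminus_0_r in h. unfold A. pose proof (Rle_abs (norm (add (T n (e k)) (opp (e k))))). lra. }
  destruct (Hsel1 A HA) as [B [HB HBf]].
  set (f := fun n => gmax (fun k => A k n) n).
  assert (Hf1 : forall n, f n = O \/ A (f n) n) by (intro n; apply gmax_spec1).
  assert (Hfbig : forall k, U (fun n => (k <= f n)%nat)).
  { intro k. destruct (HBf k) as [Nk hNk].
    eapply U_mono; [auto | apply (U_and U _ _ HU HB (U_cofin U (Nk + k) HU HN)) |].
    simpl. intros n [h1 h2]. apply gmax_spec2. lia.
    apply NNPP; intro h. specialize (hNk n (conj h1 h)). lia. }
  set (z := fun n => e (f n)).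
  assert (Hzb : bounded_seq z) by (exists 1; intro n; unfold z; rewrite He1; lra).
  destruct (weak_limit_exists U z HU HR Hzb) as [w hw].
  specialize (H z w Hzb hw).
  assert (HS : U (fun n => norm (add (T n (z n)) (opp w)) < / 8)).
  { eapply U_mono; [auto | apply (H (/8) ltac:(lra)) |]. simpl; intros n h.
    rewrite Rminus_0_r in h. pose proof (Rle_abs (norm (add (T n (z n)) (opp w)))). lra. }
  assert (Hclose : forall n, norm (add (T n (z n)) (opp w)) < / 8 -> (8 <= f n)%nat ->
     norm (add (z n) (opp w)) < / 4).
  { intros n h1 h2. destruct (Hf1 n) as [h|h]; [lia|]. unfold A in h.
    pose proof (inv8 _ h2). pose proof (ndist_tri (z n) (T n (z n)) w).
    rewrite (ndist_sym (z n) (T n (z n))) in H1. unfold z in *. lra. }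
  destruct (U_ex U _ HU (U_and U _ _ HU HS (Hfbig 8%nat))) as [n0 [h01 h02]].
  destruct (U_ex U _ HU (U_and U _ _ HU HS (Hfbig (S (f n0))))) as [m [hm1 hm2]].
  pose proof (Hclose n0 h01 h02). pose proof (Hclose m hm1 ltac:(lia)).
  pose proof (ndist_tri (z n0) w (z m)). rewrite (ndist_sym w) in H2.
  assert (f n0 <> f m) by lia.
  pose proof (Hsep _ _ H3). unfold z, e in *. lra.
Qed.
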